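(* Let $R$ be a commutative ring of Krull dimension $0$ which is integral over an Artinian subring $R_0$, and write $\mathcal{F}=\mathcal{F}(R_0,R)$. Then for every $n\ge 1$, the ring $\mathcal{F}\llbracket X_1,\ldots,X_n\rrbracket$ is a faithfully flat $R$-module.
   Context: All rings are commutative with identity, and subrings share the identity. For a $0$-dimensional ring $R$ and an Artinian subring $R_0\subseteq R$ such that $R$ is integral over $R_0$, let $\mathcal{F}(R_0,R)=\{R_\alpha\}$ denote the family of all subrings of $R$ that are finitely generated as $R_0$-algebras; this family is directed, each $R_\alpha$ is Artinian, and $R=\bigcup_\alpha R_\alpha$. The ring of Artinian power series $\mathcal{F}\llbracket X_1,\ldots,X_n\rrbracket$ is the set of all $f\in R\llbracket X_1,\ldots,X_n\rrbracket$ such that all coefficients of $f$ lie in a single $R_\alpha\in\mathcal{F}$; equivalently, $\mathcal{F}\llbracket X_1,\ldots,X_n\rrbracket=\bigcup_\alpha R_\alpha\llbracket X_1,\ldots,X_n\rrbracket$, which is a subring of $R\llbracket X_1,\ldots,X_n\rrbracket$. *)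

(* Defs.v *)
From HB Require Import structures.
From mathcomp Require Import all_boot all_order all_algebra.
From mathcomp Require Import boolp classical_sets functions.
Set Implicit Arguments.
Unset Strict Implicit.
Unset Printing Implicit Defensive.
Import Order.TTheory GRing.Theory.
Local Open Scope classical_set_scope.
Local Open Scope ring_scope.

Definition is_ideal (R : comNzRingType) (I : set R) : Prop :=
  [/\ I 0, (forall x y, I x -> I y -> I (x + y)) & (forall r x, I x -> I (r * x))].

Definition prime_ideal (R : comNzRingType) (P : set R) : Prop :=
  [/\ is_ideal P, ~ P 1 & (forall x y, P (x * y) -> P x \/ P y)].

Definition maximal_ideal (R : comNzRingType) (M : set R) : Prop :=
  [/\ is_ideal M, ~ M 1 &
      (forall J : set R, is_ideal J -> M `<=` J -> ~ J 1 -> J = M)].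

Definition krull_dim0 (R : comNzRingType) : Prop :=
  forall P : set R, prime_ideal P -> maximal_ideal P.

Definition is_subring (R : comNzRingType) (S : set R) : Prop :=
  [/\ S 1, (forall x y, S x -> S y -> S (x - y)) & (forall x y, S x -> S y -> S (x * y))].

Definition ideal_of (R : comNzRingType) (R0 J : set R) : Prop :=
  [/\ J `<=` R0, J 0, (forall x y, J x -> J y -> J (x + y))
    & (forall r x, R0 r -> J x -> J (r * x))].

Definition artinian_subring (R : comNzRingType) (R0 : set R) : Prop :=
  is_subring R0 /\
  forall J : nat -> set R, (forall k, ideal_of R0 (J k)) ->
    (forall k, J k.+1 `<=` J k) -> exists N, forall k, (N <= k)%N -> J k = J N.

Definition integral_over (R : comNzRingType) (R0 : set R) : Prop :=
  forall x : R, exists p : {poly R},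
    [/\ p \is monic, (forall i, R0 p`_i) & root p x].

Definition gen_subalg (R : comNzRingType) (R0 : set R) (s : seq R) : set R :=
  fun x => forall S : set R, is_subring S -> R0 `<=` S ->
    (forall y, y \in s -> S y) -> S x.

(* Power series in X_1..X_n over R, identified with their coefficient
   functions on multi-indices (exponent vectors) 'I_n -> nat. *)
Definition mindex (n : nat) := {ffun 'I_n -> nat}.

(* f is an Artinian power series: all coefficients lie in a single R_alpha. *)
Definition in_F (R : comNzRingType) (R0 : set R) (n : nat) (f : mindex n -> R) : Prop :=
  exists s : seq R, forall a, gen_subalg R0 s (f a).

Section ArtinianPS.
Context (R : comNzRingType) (R0 : set R) (n : nat).

Definition in_Fb : {pred mindex n -> R^o} := fun f => `[< in_F R0 f >].

Record artinian_ps := APS { ps_coef : mindex n -> R^o ; _ : ps_coef \in in_Fb }.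

HB.instance Definition _ := [isSub for ps_coef].
HB.instance Definition _ := [Choice of artinian_ps by <:].

Lemma in_Fb_submod : GRing.submod_closed in_Fb.
Proof.
split.
  apply/asboolP; exists [::] => a S [S1 SB SM] _ _.
  by have := SB 1 1 S1 S1; rewrite subrr.
move=> c u v /asboolP [s Hu] /asboolP [t Hv]; apply/asboolP.
exists (c :: s ++ t) => a S [S1 SB SM] H0 Hs.

have sub0 : forall x, S x -> S (- x).
  by move=> x Sx; rewrite -sub0r; apply: (SB) => //; have := SB 1 1 S1 S1; rewrite subrr.
have add0 : forall x y, S x -> S y -> S (x + y).
  by move=> x y Sx Sy; rewrite -[y]opprK; apply: (SB) => //; apply: (sub0).
rewrite /= !fctE; apply: (add0).
  apply: (SM); first by apply: Hs; rewrite inE eqxx.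
  by apply: Hu => // y ys; apply: Hs; rewrite inE mem_cat ys orbT.
by apply: Hv => // y yt; apply: Hs; rewrite inE mem_cat yt !orbT.
Qed.

HB.instance Definition _ := GRing.isSubmodClosed.Build R (mindex n -> R^o) in_Fb in_Fb_submod.
HB.instance Definition _ := [SubChoice_isSubLmodule of artinian_ps by <:].

End ArtinianPS.

Definition bilinear_map (R : comNzRingType) (N M P : lmodType R) (B : N -> M -> P) : Prop :=
  (forall a x y m, B (a *: x + y) m = a *: B x m + B y m) /\
  (forall a n x y, B n (a *: x + y) = a *: B n x + B n y).

(* The element sum_k n_k (x) m_k of N (x)_R M (encoded by the list of pairs s)
   is zero: every R-bilinear map kills it. *)
Definition tensor_zero (R : comNzRingType) (N M : lmodType R) (s : seq (N * M)) : Prop :=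
  forall (P : lmodType R) (B : N -> M -> P), bilinear_map B ->
    \sum_(p <- s) B p.1 p.2 = 0.

Definition tensor_eq (R : comNzRingType) (N M : lmodType R) (s t : seq (N * M)) : Prop :=
  tensor_zero (s ++ [seq (- p.1, p.2) | p <- t]).

Definition exact_at (R : comNzRingType) (N1 N2 N3 : lmodType R)
  (f : N1 -> N2) (g : N2 -> N3) : Prop :=
  forall y, g y = 0 -> exists x, f x = y.

Definition tensor_exact_at (R : comNzRingType) (N1 N2 N3 M : lmodType R)
  (f : N1 -> N2) (g : N2 -> N3) : Prop :=
  forall s : seq (N2 * M), tensor_zero [seq (g p.1, p.2) | p <- s] ->
    exists t : seq (N1 * M), tensor_eq [seq (f p.1, p.2) | p <- t] s.

Definition faithfully_flat (R : comNzRingType) (M : lmodType R) : Prop :=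
  forall (N1 N2 N3 : lmodType R) (f : {linear N1 -> N2}) (g : {linear N2 -> N3}),
    (forall x, g (f x) = 0) ->
    (exact_at f g <-> tensor_exact_at M f g).

(* Main.v *)
Require Import Defs.
From HB Require Import structures.
From mathcomp Require Import all_boot all_order all_algebra.
From mathcomp Require Import boolp classical_sets functions.
From mathcomp Require Import ring zify.
Set Implicit Arguments.
Unset Strict Implicit.
Unset Printing Implicit Defensive.
Import Order.TTheory GRing.Theory.
Local Open Scope classical_set_scope.
Local Open Scope ring_scope.


Section Lin.
Variables (R : comNzRingType) (S : set R).
Hypothesis SR : is_subring S.

Lemma S1 : S 1. Proof. by case: SR. Qed.
Lemma SB x y : S x -> S y -> S (x - y). Proof. by case: SR => _ H _; apply: H. Qed.
Lemma SM x y : S x -> S y -> S (x * y). Proof. by case: SR => _ _ H; apply: H. Qed.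
Lemma S0 : S 0. Proof. by rewrite -(subrr 1); apply: SB; apply: S1. Qed.
Lemma SN x : S x -> S (- x). Proof. by move=> Sx; rewrite -sub0r; apply: SB => //; apply: S0. Qed.
Lemma SD x y : S x -> S y -> S (x + y).
Proof. by move=> Sx Sy; rewrite -[y]opprK; apply: SB => //; apply: SN. Qed.

Variable V : lmodType R.

Fixpoint lin (l : seq V) (x : V) : Prop :=
  if l is v :: l' then exists c, S c /\ lin l' (x - c *: v) else x = 0.

Lemma lin0 l : lin l 0.
Proof. elim: l => [|v l IH] //=; exists 0; split; first exact: S0. by rewrite scale0r subr0. Qed.

Lemma linD l x y : lin l x -> lin l y -> lin l (x + y).
Proof.
elim: l x y => [|v l IH] x y /=; first by move=> -> ->; rewrite addr0.
move=> [c [Sc Hx]] [d [Sd Hy]]; exists (c + d); split; first exact: SD.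
have -> : x + y - (c + d) *: v = (x - c *: v) + (y - d *: v).
  by rewrite scalerDl opprD addrACA.
exact: IH.
Qed.

Lemma linZ l a x : S a -> lin l x -> lin l (a *: x).
Proof.
elim: l x => [|v l IH] x Sa /=; first by move=> ->; rewrite scaler0.
move=> [c [Sc Hx]]; exists (a * c); split; first exact: SM.
by rewrite -scalerA -scalerBr; apply: IH.
Qed.

Lemma linN l x : lin l x -> lin l (- x).
Proof. by move=> H; rewrite -scaleN1r; apply: linZ => //; apply: SN; apply: S1. Qed.

Lemma linB l x y : lin l x -> lin l y -> lin l (x - y).
Proof. by move=> Hx Hy; apply: linD => //; apply: linN. Qed.

Lemma lin_sum I (r : seq I) (F : I -> V) l :
  (forall i, lin l (F i)) -> lin l (\sum_(i <- r) F i).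
Proof.
elim: r => [|i r IH] H; first by rewrite big_nil; apply: lin0.
by rewrite big_cons; apply: linD; [apply: H | apply: IH].
Qed.

Lemma lin_cons v l x : lin l x -> lin (v :: l) x.
Proof. by move=> H /=; exists 0; split; [exact: S0 | rewrite scale0r subr0]. Qed.

Lemma lin_mem l v : v \in l -> lin l v.
Proof.
elim: l => [|w l IH] //= ; rewrite inE => /orP [/eqP ->|vl].
  by exists 1; split; [exact: S1| rewrite scale1r subrr; apply: lin0].
by exists 0; split; [exact: S0| rewrite scale0r subr0; apply: IH].
Qed.

Lemma lin_trans l1 l2 x : (forall w, w \in l2 -> lin l1 w) -> lin l2 x -> lin l1 x.
Proof.
elim: l2 x => [|v l2 IH] x H /=; first by move=> ->; apply: lin0.
move=> [c [Sc Hx]].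
have -> : x = (x - c *: v) + c *: v by rewrite subrK.
apply: linD; last by apply: linZ => //; apply: H; rewrite inE eqxx.
by apply: IH => // w wl; apply: H; rewrite inE wl orbT.
Qed.

Lemma lin_sub l1 l2 x : {subset l2 <= l1} -> lin l2 x -> lin l1 x.
Proof. by move=> sub; apply: lin_trans => w /sub; apply: lin_mem. Qed.

Lemma linP l x : lin l x ->
  exists c : nat -> R, (forall i, S (c i)) /\ x = \sum_(i < size l) c i *: l`_i.
Proof.
elim: l x => [|v l IH] x /=.
  by move=> ->; exists (fun=> 0); split; [move=> _; exact: S0| rewrite big_ord0].
move=> [c [Sc /IH [d [Sd Hd]]]].
exists (fun i => if i is i'.+1 then d i' else c); split; first by case.
by rewrite big_ord_recl /= -Hd addrC subrK.
Qed.

End Lin.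

Lemma lin_map (R : comNzRingType) (S : set R) (V W : lmodType R) (f : V -> W) l x :
  is_subring S ->
  (forall a u v, f (a *: u + v) = a *: f u + f v) ->
  lin S l x -> lin S (map f l) (f x).
Proof.
move=> SR fl.
have f0 : f 0 = 0.
  have H := fl 1 0 0; rewrite scaler0 add0r scale1r in H.
  by apply: (addrI (f 0)); rewrite addr0 -H.
have fB u v : f (u - v) = f u - f v.
  have := fl (-1) v u; rewrite scaleN1r addrC => ->; by rewrite scaleN1r addrC.
elim: l x => [|v l IH] x /=; first by move=> ->.
have fZ a u : f (a *: u) = a *: f u by have := fl a u 0; rewrite !addr0 f0 addr0.
by move=> [c [Sc H]]; exists c; split => //; move: (IH _ H); rewrite fB fZ.
Qed.


Section Ideals.
Variables (R : comNzRingType) (R0 : set R).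
Hypothesis SR : is_subring R0.

Local Notation ideal I := (ideal_of R0 I).
Let S0 := S0 SR. Let S1 := S1 SR. Let SB := SB SR. Let SM := SM SR.
Let SN := SN SR. Let SD := SD SR.

Section IdealFacts.
Variable I : set R.
Hypothesis HI : ideal I.
Lemma iR0 x : I x -> R0 x. Proof. by case: HI => H _ _ _; apply: H. Qed.
Lemma ideal_sub : I `<=` R0. Proof. by case: HI. Qed.
Lemma i0 : I 0. Proof. by case: HI. Qed.
Lemma iD x y : I x -> I y -> I (x + y). Proof. by case: HI => _ _ H _; apply: H. Qed.
Lemma iM r x : R0 r -> I x -> I (r * x). Proof. by case: HI => _ _ _ H; apply: H. Qed.
Lemma iMr r x : I x -> R0 r -> I (x * r). Proof. by rewrite mulrC => *; apply: iM. Qed.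
Lemma iN x : I x -> I (- x).
Proof. by move=> Ix; rewrite -mulN1r; apply: iM => //; apply: SN => //; apply: S1. Qed.
Lemma iB x y : I x -> I y -> I (x - y). Proof. by move=> *; apply: iD => //; apply: iN. Qed.
End IdealFacts.

Lemma ideal_R0 : ideal R0.
Proof.
split => //; try exact: SD; try (move=> r x Hr Hx; exact: SM).
Qed.

Lemma ideal_zero : ideal [set 0].
Proof. split => //; [by move=> x ->; exact: S0| by move=> x y -> ->; rewrite addr0 | by move=> r x _ ->; rewrite mulr0]. Qed.

Definition mulI (I J : set R) : set R := fun x =>
  forall K, ideal K -> (forall i j, I i -> J j -> K (i * j)) -> K x.

Lemma mulI_ideal I J : I `<=` R0 -> J `<=` R0 -> ideal (mulI I J).
Proof.
move=> IR JR; split.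
- by move=> x Hx; apply: Hx; [exact: ideal_R0| move=> i j Ii Jj; apply: SM; [apply: IR|apply: JR]].
- by move=> K HK _; apply: i0.
- by move=> x y Hx Hy K HK Hp; apply: iD => //; [apply: Hx | apply: Hy].
- by move=> r x Hr Hx K HK Hp; apply: iM => //; apply: Hx.
Qed.

Lemma mulI_mem I J i j : I i -> J j -> mulI I J (i * j).
Proof. by move=> Ii Jj K _ H; apply: H. Qed.

Lemma mulI_min I J K : ideal K -> (forall i j, I i -> J j -> K (i * j)) -> mulI I J `<=` K.
Proof. by move=> HK H x Hx; apply: Hx. Qed.

Lemma mulI_subl I J : ideal I -> J `<=` R0 -> mulI I J `<=` I.
Proof. by move=> HI JR; apply: mulI_min => // i j Ii Jj; apply: iMr => //; apply: JR. Qed.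

Lemma mulI_subr I J : I `<=` R0 -> ideal J -> mulI I J `<=` J.
Proof. by move=> IR HJ; apply: mulI_min => // i j Ii Jj; apply: iM => //; apply: IR. Qed.

Definition maxI (m : set R) :=
  [/\ ideal m, ~ m 1 & forall J, ideal J -> m `<=` J -> ~ J 1 -> J = m].

Lemma max_inv m c : maxI m -> R0 c -> ~ m c ->
  exists u mu, [/\ R0 u, m mu & u * c = 1 - mu].
Proof.
move=> [Hm m1 mmax] Rc mc.
pose J := fun y => exists mu u, [/\ m mu, R0 u & y = mu + u * c].
have HJ : ideal J.
  split.
  - move=> y [mu [u [mmu Ru ->]]]; apply: SD => //; [exact: iR0 mmu | exact: SM].
  - by exists 0, 0; split; [apply: i0 | apply: S0 | rewrite mul0r addr0].
  - move=> x y [mu [u [mmu Ru ->]]] [mu' [u' [mmu' Ru' ->]]].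
    exists (mu + mu'), (u + u'); split; [exact: iD | exact: SD | ].
    by rewrite mulrDl addrACA.
  - move=> r y Rr [mu [u [mmu Ru ->]]]; exists (r * mu), (r * u); split.
    + exact: iM. + exact: SM. + by rewrite mulrDr mulrA.
have mJ : m `<=` J by move=> y my; exists y, 0; split => //; rewrite mul0r addr0.
have J1 : J 1.
  apply: contrapT => nJ1; apply: mc; rewrite -(mmax J HJ mJ nJ1).
  by exists 0, 1; split; [apply: i0 | exact: S1 | rewrite mul1r add0r].
case: J1 => mu [u [mmu Ru E]]; exists u, mu; split => //.
by rewrite E [mu + _]addrC addrK.
Qed.

Lemma exists_max A : ideal A -> ~ A 1 -> exists m, maxI m /\ A `<=` m.
Proof.
move=> HA nA1.
pose P := fun X : set R => (ideal X /\ A `<=` X /\ ~ X 1) \/ X = set0.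
have [|M [PM Mmax]] := @Zorn_bigcup R P.
  move=> F FP Ftot.
  case: (pselect (exists X, F X /\ X !=set0)) => [[X0 [FX0 [z X0z]]]|Hne]; last first.
    right; apply/seteqP; split => // y [X FX Xy]; apply: Hne; exists X; split => //; by exists y.
  have Fid X : F X -> X !=set0 -> ideal X /\ A `<=` X /\ ~ X 1.
    by move=> FX [y Xy]; case: (FP X FX) => // E; rewrite E in Xy.
  have [HX0 [AX0 _]] := Fid X0 FX0 (ex_intro _ z X0z).
  have big2 X Y x y : F X -> F Y -> X x -> Y y ->
      exists Z, [/\ F Z, ideal Z, Z x & Z y].
    move=> FX FY Xx Yy; have [XY|YX] := Ftot X Y FX FY.
    - by exists Y; split => //; [case: (Fid Y FY) => //; exists y| apply: XY].
    - by exists X; split => //; [case: (Fid X FX) => //; exists x| apply: YX].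
  left; split; [split|split].
  - by move=> x [X FX Xx]; have [HX _] := Fid X FX (ex_intro _ x Xx); exact: iR0 HX _ Xx.
  - by exists X0 => //; apply: i0.
  - move=> x y [X FX Xx] [Y FY Yy]; have [Z [FZ HZ Zx Zy]] := big2 X Y x y FX FY Xx Yy.
    by exists Z => //; apply: iD.
  - by move=> r x Rr [X FX Xx]; exists X => //; have [HX _] := Fid X FX (ex_intro _ x Xx); apply: iM.
  - by move=> y Ay; exists X0 => //; apply: AX0.
  - by move=> [X FX X1]; have [_ [_ nX1]] := Fid X FX (ex_intro _ 1 X1).
case: PM => [[HM [AM nM1]]|M0]; last first.
  exfalso; apply: (Mmax A); last by rewrite /P; left; split => //; split.
  rewrite M0; split => // Hsub; have := Hsub 0 (i0 HA); by [].
exists M; split => //; split => // J HJ MJ nJ1.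
apply: contrapT => JM; apply: (Mmax J); last by rewrite /P; left; split => //; split => //; apply: subset_trans MJ.
split => // JsubM; apply: JM; apply/seteqP; split => //.
Qed.

End Ideals.


Lemma mapP' (T1 : Type) (T2 : eqType) (f : T1 -> T2) s y :
  y \in map f s -> exists x, List.In x s /\ y = f x.
Proof.
elim: s => [|x s IH] //=; rewrite inE => /orP [/eqP ->|/IH [z [zs ->]]].
  by exists x; split => //; left.
by exists z; split => //; right.
Qed.

Lemma map_f' (T1 : Type) (T2 : eqType) (f : T1 -> T2) s x :
  List.In x s -> f x \in map f s.
Proof.
elim: s => [|z s IH] //= [->|xs]; rewrite inE; first by rewrite eqxx.
by rewrite IH ?orbT.
Qed.

Section Hopkins.
Variables (R : comNzRingType) (R0 : set R).
Hypothesis Art : artinian_subring R0.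
Let SR : is_subring R0 := proj1 Art.
Local Notation ideal I := (ideal_of R0 I).
Let S0 := S0 SR. Let S1 := S1 SR. Let SB := SB SR. Let SM := SM SR.
Let SN := SN SR. Let SD := SD SR.

Lemma dcc_min (P : set R -> Prop) I0 : ideal I0 -> P I0 ->
  exists I, [/\ ideal I, P I & forall J, ideal J -> P J -> J `<=` I -> J = I].
Proof.
move=> HI0 PI0; apply: contrapT => Hno.
have step : forall I, exists J, ideal I /\ P I -> [/\ ideal J, P J, J `<=` I & J <> I].
  move=> I; case: (pselect (ideal I /\ P I)) => [[HI PI]|nI]; last by exists I.
  apply: contrapT => nJ; apply: Hno; exists I; split => // J HJ PJ JI.
  apply: contrapT => JnI; apply: nJ; by exists J => _; split.
have [nx Hnx] := choice step.
pose J k := iter k nx I0.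
have HJ k : ideal (J k) /\ P (J k).
  elim: k => [|k [IH1 IH2]] //=; by have [] := Hnx (J k) (conj IH1 IH2).
have [N HN] := (proj2 Art) J (fun k => proj1 (HJ k)) (fun k => let: And4 _ _ s _ := Hnx (J k) (HJ k) in s).
have [_ _ _ ne] := Hnx (J N) (HJ N).
by apply: ne; have := HN N.+1 (leqnSn N).
Qed.

Inductive pm : set R -> Prop :=
| pm_top : pm R0
| pm_step K m : pm K -> maxI R0 m -> pm (mulI R0 K m).

Lemma pm_ideal K : pm K -> ideal K.
Proof.
elim=> [|K' m _ IH [Hm _ _]]; first exact: ideal_R0 SR.
apply: (mulI_ideal SR) => x Hx; [exact: (ideal_sub IH Hx) | exact: (ideal_sub Hm Hx)].
Qed.

Lemma pm_zero : exists K, pm K /\ forall x, K x -> x = 0.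
Proof.
have [Q [HQ pmQ Qmin]] := dcc_min (ideal_R0 SR) pm_top.
exists Q; split => // q0 Qq0; apply: contrapT => q0n.
have QR : Q `<=` R0 by exact: ideal_sub HQ.
have Qm m : maxI R0 m -> mulI R0 Q m = Q.
  move=> Hm; have [Hmi _ _] := Hm; apply: Qmin.
  - by apply: (mulI_ideal SR) => //; exact: ideal_sub Hmi.
  - exact: pm_step.
  - by apply: mulI_subl => //; exact: ideal_sub Hmi.
pose G := fun I => exists y, mulI R0 Q I y /\ y <> 0.
have GR0 : G R0 by exists (q0 * 1); split; [apply: mulI_mem => //; exact: S1 | rewrite mulr1].
have [I [HI GI Imin]] := dcc_min (ideal_R0 SR) GR0.
have IR : I `<=` R0 by exact: ideal_sub HI.
have [x [q [Ix Qq qx]]] : exists x q, [/\ I x, Q q & q * x <> 0].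
  apply: contrapT => Hn; case: GI => y [Hy yn]; apply: yn.
  have := mulI_min (ideal_zero SR) _ Hy; apply => q' x' Qq' Ix'.
  by apply: contrapT => nz; apply: Hn; exists x', q'; split.
have Rx : R0 x by apply: IR.
pose xR := fun y => exists r, R0 r /\ y = r * x.
have HxR : ideal xR.
  split.
  - by move=> y [r [Rr ->]]; apply: SM.
  - by exists 0; split; [exact: S0 | rewrite mul0r].
  - by move=> y z [r [Rr ->]] [s [Rs ->]]; exists (r + s); split; [exact: SD| rewrite mulrDl].
  - by move=> t y Rt [r [Rr ->]]; exists (t * r); split; [exact: SM| rewrite mulrA].
have xRI : xR = I.
  apply: (Imin xR HxR); last by move=> y [r [Rr ->]]; exact (iM HI Rr Ix).
  exists (q * x); split => //; rewrite -[x in q * x]mul1r; apply: mulI_mem => //.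
  by exists 1; split; [exact: S1| rewrite mul1r].
have key m : maxI R0 m -> exists mu, m mu /\ x = mu * x.
  move=> Hm; have [Hmi _ _] := Hm.
  have mR : m `<=` R0 by exact: ideal_sub Hmi.
  have HmI : ideal (mulI R0 m I) by apply: (mulI_ideal SR).
  have : mulI R0 m I = I.
    apply: Imin => //; last by apply: mulI_subr.
    exists (q * x); split => //.
    have HQmI : ideal (mulI R0 Q (mulI R0 m I)) by apply: (mulI_ideal SR) => //; exact: ideal_sub HmI.
    pose X := fun z => R0 z /\ mulI R0 Q (mulI R0 m I) (z * x).
    have HX : ideal X.
      split.
      - by move=> z [].
      - by split; [exact: S0 | rewrite mul0r; exact (i0 HQmI)].
      - move=> y z [Ry Hy] [Rz Hz]; split; first exact: SD.
        by rewrite mulrDl; exact (iD HQmI Hy Hz).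
      - move=> t y Rt [Ry Hy]; split; first exact: SM.
        by rewrite -mulrA; exact (iM HQmI Rt Hy).
    have : mulI R0 Q m `<=` X.
      apply: mulI_min => // q' mu Qq' mmu; split; first by apply: SM; [apply: QR| apply: mR].
      by rewrite -mulrA; apply: mulI_mem => //; apply: mulI_mem.
    by rewrite Qm // => /(_ q Qq) [].
  rewrite -xRI => E; have : mulI R0 m xR x by rewrite E; exists 1; split; [exact: S1| rewrite mul1r].
  pose Y := fun z => exists mu, m mu /\ z = mu * x.
  have HY : ideal Y.
    split.
    - by move=> y [mu [mmu ->]]; apply: SM => //; apply: mR.
    - by exists 0; split; [exact (i0 Hmi) | rewrite mul0r].
    - by move=> y z [r [Rr ->]] [s [Rs ->]]; exists (r + s); split; [exact (iD Hmi Rr Rs)| rewrite mulrDl].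
    - by move=> t y Rt [r [Rr ->]]; exists (t * r); split; [exact (iM Hmi Rt Rr)| rewrite mulrA].
  move/(mulI_min HY); apply => mu y mmu [r [Rr ->]]; exists (mu * r); split; first exact (iMr Hmi mmu Rr).
  by rewrite mulrA.
pose Ann := fun r => R0 r /\ r * x = 0.
have HAnn : ideal Ann.
  split.
  - by move=> y [].
  - by split; [exact: S0 | rewrite mul0r].
  - by move=> y z [Ry Hy] [Rz Hz]; split; [exact: SD| rewrite mulrDl Hy Hz addr0].
  - by move=> t y Rt [Ry Hy]; split; [exact: SM| rewrite -mulrA Hy mulr0].
have nA1 : ~ Ann 1 by move=> [_]; rewrite mul1r => x0; apply: qx; rewrite x0 mulr0.
have [m [Hm Annm]] := exists_max HAnn nA1.
have [mu [mmu xE]] := key m Hm.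
have [Hmi m1 _] := Hm; apply: m1.
have : m (1 - mu).
  apply: Annm; split; first by apply: SB; [exact: S1| exact (ideal_sub Hmi mmu)].
  by rewrite mulrBl mul1r -xE subrr.
by move=> H; rewrite -(subrK mu 1); exact (iD Hmi H mmu).
Qed.


Lemma lin_cat_split (V : lmodType R) (l1 l2 : seq V) x :
  lin R0 (l1 ++ l2) x -> exists y, lin R0 l1 y /\ lin R0 l2 (x - y).
Proof.
elim: l1 x => [|w l1 IH] x /=; first by move=> H; exists 0; split => //; rewrite subr0.
move=> [c [Rc /IH [y [Hy Hxy]]]]; exists (c *: w + y); split.
  by exists c; split => //; rewrite addrAC subrr add0r.
by rewrite opprD addrA.
Qed.

Lemma lin_ideal I (l : seq R^o) (x : R^o) : ideal I -> (forall v, v \in l -> I v) -> lin R0 l x -> I x.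
Proof.
move=> HI; elim: l x => [|v l IH] x Hl /=; first by move=> ->; exact (i0 HI).
move=> [c [Rc H]].
have Hl' : forall w, w \in l -> I w by move=> w wl; apply: Hl; rewrite inE wl orbT.
have H1 := IH _ Hl' H.
rewrite -(subrK (c *: v) x); apply: (iD HI H1).
exact (iM HI Rc (Hl v (mem_head _ _))).
Qed.

Definition linm (C : set R) (l : seq R^o) (x : R^o) := exists k, C k /\ lin R0 l (x - k).

Lemma layer K m (E : Type) (d : E -> R^o) : ideal K -> maxI R0 m -> (forall e, K (d e)) ->
  exists es : seq E, forall e, linm (mulI R0 K m) (map d es) (d e).
Proof.
move=> HK Hm Kd; have [Hmi m1 _] := Hm.
set C := mulI R0 K m.
have HC : ideal C by apply: (mulI_ideal SR); [exact: ideal_sub HK| exact: ideal_sub Hmi].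
have CK : C `<=` K by apply: mulI_subl => //; exact: ideal_sub Hmi.
have KR : K `<=` R0 by exact: ideal_sub HK.
apply: contrapT => H.
have H' : forall es : seq E, exists e, ~ linm C (map d es) (d e).
  move=> es; apply: contrapT => Hn; apply: H; exists es => e.
  by apply: contrapT => Hne; apply: Hn; exists e.
have [nxt Hnxt] := choice H'.
pose s := fix s n := if n is n'.+1 then rcons (s n') (nxt (s n')) else [::].
pose e n := nxt (s n).
have sE n : s n = map e (iota 0 n).
  elim: n => [|n IH] //; rewrite -[in RHS]addn1 iotaD map_cat /= add0n cats1 -IH //.
have Pn n : ~ linm C (map d (s n)) (d (e n)) by apply: Hnxt.
have ins i n : (i < n)%N -> d (e i) \in map d (s n).
  by move=> lt; rewrite sE -map_comp; apply: map_f; rewrite mem_iota.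
pose L n J := [seq d (e (n + j)%N) | j <- iota 0 J].
pose W n := fun y => exists J, linm C (L n J) y.
have subL n J J' : (J <= J')%N -> {subset L n J <= L n J'}.
  move=> le y /mapP [j jin ->]; apply: map_f; move: jin; rewrite !mem_iota /= => lt.
  exact: leq_trans lt le.
have HW n : ideal (W n).
  split.
  - move=> y [J [k [Ck Hl]]]; apply: KR; rewrite -(subrK k y); apply: (iD HK); last exact: CK.
    apply: (lin_ideal HK) Hl => v /mapP [j _ ->]; exact: Kd.
  - by exists 0%N, 0; split; [exact (i0 HC)| rewrite subr0].
  - move=> x y [J1 [k1 [Ck1 H1]]] [J2 [k2 [Ck2 H2]]]; exists (maxn J1 J2), (k1 + k2); split.
      exact (iD HC Ck1 Ck2).
    rewrite opprD addrACA; apply: (linD SR).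
      exact: (lin_sub SR (subL _ _ _ (leq_maxl J1 J2)) H1).
    exact: (lin_sub SR (subL _ _ _ (leq_maxr J1 J2)) H2).
  - move=> r x Rr [J [k [Ck Hl]]]; exists J, (r * k); split; first exact (iM HC Rr Ck).
    by rewrite -mulrBr; apply: (linZ SR Rr Hl).
have Wdec n : W n.+1 `<=` W n.
  move=> y [J [k [Ck Hl]]]; exists J.+1, k; split => //; apply: (lin_sub SR) Hl.
  move=> v /mapP [j jin ->]; apply/mapP; exists j.+1; last by apply: (congr1 (fun k => d (e k))); rewrite addSn addnS.
  by move: jin; rewrite !mem_iota.
have [N HN] := (proj2 Art) W HW Wdec.
have WN : W N (d (e N)).
  exists 1%N, 0; split; first exact (i0 HC).
  by rewrite subr0; apply: (lin_mem SR); rewrite /L /= addn0 mem_head.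
have : W N.+1 (d (e N)) by rewrite (HN N.+1 (leqnSn N)).
case=> J; elim: J => [|J IH].
  move=> [k [Ck /= H0]]; apply: (Pn N); exists k; split => //; rewrite H0; exact: (lin0 SR).
move=> [k [Ck]]; rewrite /L -[J.+1]addn1 iotaD map_cat /= => /lin_cat_split [y [Hy]] /= [c [Rc]] /= E0.
set v := d (e (N.+1 + J)%N) in E0.
have zE : d (e N) = k + y + c * v.
  transitivity ((d (e N) - k - y - c *: v) + (k + y + c * v)); last by rewrite E0 add0r.
  change (c *: v) with (c * v); ring.
case: (pselect (m c)) => mc.
  apply: IH; exists (k + c * v); split.
    apply: (iD HC Ck); rewrite mulrC; apply: mulI_mem => //; exact: Kd.
  by have -> : d (e N) - (k + c * v) = y by rewrite zE; ring.
have [u [mu [Ru mmu E2]]] := max_inv SR Hm Rc mc.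
apply: (Pn (N.+1 + J)%N); exists (mu * v - u * k); split.
  apply: (iB SR HC); last by exact (iM HC Ru Ck).
  by rewrite mulrC; apply: mulI_mem => //; exact: Kd.
have -> : d (e (N.+1 + J)%N) - (mu * v - u * k) = u * d (e N) - u * y.
  rewrite -/v zE.
  have -> : u * (k + y + c * v) = u * (k + y) + (u * c) * v by rewrite mulrDr mulrA.
  rewrite E2; ring.
apply: (linB SR).
  by apply: (linZ SR Ru); apply: (lin_mem SR); apply: ins; rewrite addSn ltnS leq_addr.
apply: (linZ SR Ru); apply: (lin_sub SR) Hy => w /mapP [j jin ->]; apply: ins.
by move: jin; rewrite mem_iota leq0n add0n /= ltn_add2l.
Qed.

Definition noethmod K := forall (E : Type) (a : E -> R^o), (forall e, R0 (a e)) ->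
  exists es : seq E, forall e, linm K (map a es) (a e).

Lemma noeth_pm K : pm K -> noethmod K.
Proof.
elim=> [|K' m pK IH Hm] E a Ra.
  by exists [::] => e; exists (a e); split => //; rewrite subrr.
have HK := pm_ideal pK.
have [es1 H1] := IH E a Ra.
have [kk0 Hkk] := choice (fun e => H1 e).
pose kk := fun e => (kk0 e : R^o).
have [es2 H2] := @layer K' m E kk HK Hm (fun e => proj1 (Hkk e)).
exists (es1 ++ es2) => e; have [c [Cc Hc]] := H2 e; exists c; split => //.
have sub1 : {subset map a es1 <= map a (es1 ++ es2)} by move=> w; rewrite map_cat mem_cat => ->.
rewrite -(subrK (kk e) (a e)) -addrA; apply: (linD SR).
  by apply: (lin_sub SR sub1); exact: (proj2 (Hkk e)).
apply: (lin_trans SR) Hc => w /mapP' [f [fin ->]].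
have -> : kk f = a f - (a f - kk f) by rewrite opprB addrC subrK.
apply: (linB SR); first by apply: (lin_mem SR); apply: map_f'; apply: List.in_or_app; right.
by apply: (lin_sub SR sub1); exact: (proj2 (Hkk f)).
Qed.

Theorem hopkins (E : Type) (a : E -> R^o) : (forall e, R0 (a e)) ->
  exists es : seq E, forall e, lin R0 (map a es) (a e).
Proof.
move=> Ra; have [K [pK K0]] := pm_zero.
have [es H] := noeth_pm pK Ra; exists es => e.
by have [k [Kk Hk]] := H e; move: Hk; rewrite (K0 _ Kk) subr0.
Qed.

Lemma lin_nth (V : lmodType R) (l : seq V) i : lin R0 l l`_i.
Proof.
case: (ltnP i (size l)) => lt; first by apply: (lin_mem SR); apply: mem_nth.
by rewrite nth_default //; apply: (lin0 SR).
Qed.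

Lemma noeth_mod (V : lmodType R) (W : seq V) (E : Type) (v : E -> V) :
  (forall e, lin R0 W (v e)) -> exists es : seq E, forall e, lin R0 (map v es) (v e).
Proof.
elim: W E v => [|w W IH] E v /= Hv.
  by exists [::] => e; rewrite Hv.
have [cf Hcf] := choice Hv.
have [es1 H1] := @hopkins E (fun e => (cf e : R^o)) (fun e => proj1 (Hcf e)).
have [lam Hlam] := choice (fun e => linP SR (H1 e)).
pose g f := v f - cf f *: w.
have Hg f : lin R0 W (g f) by exact: (proj2 (Hcf f)).
have gE : forall i, (map v es1)`_i - (map (fun e => (cf e : R^o)) es1)`_i *: w = (map g es1)`_i.
  elim: es1 {H1 Hlam} => [|f es IHes] i /=; first by rewrite !nth_nil scale0r subr0.
  by case: i => [|i] //=.
pose d e := v e - \sum_(i < size es1) lam e i *: (map v es1)`_i.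
have Hd e : lin R0 W (d e).
  have -> : d e = g e - \sum_(i < size es1) lam e i *: (map g es1)`_i.
    have SE : \sum_(i < size es1) lam e i *: (map g es1)`_i =
        \sum_(i < size es1) lam e i *: (map v es1)`_i -
        (\sum_(i < size es1) lam e i *: (map (fun e => (cf e : R^o)) es1)`_i) *: w.
      rewrite scaler_suml -sumrB; apply: eq_bigr => i _.
      by rewrite -gE scalerBr scalerA.
    have [_ Ec] := Hlam e; rewrite size_map in Ec.
    rewrite SE -Ec /d /g; set S := \sum_(i < size es1) _.
    by rewrite opprB addrA subrK.
  apply: (linB SR) => //; apply: (lin_sum SR) => i; apply: (linZ SR (proj1 (Hlam e) i)).
  have := lin_nth (map g es1) i; apply: (lin_trans SR) => u /mapP' [f [_ ->]]; exact: Hg.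
have [es2 H2] := IH E d Hd.
exists (es1 ++ es2) => e.
have sub1 : {subset map v es1 <= map v (es1 ++ es2)} by move=> u; rewrite map_cat mem_cat => ->.
have Hsum f : lin R0 (map v (es1 ++ es2)) (\sum_(i < size es1) lam f i *: (map v es1)`_i).
  apply: (lin_sum SR) => i; apply: (linZ SR (proj1 (Hlam f) i)).
  by apply: (lin_sub SR sub1); apply: lin_nth.
rewrite -(subrK (\sum_(i < size es1) lam e i *: (map v es1)`_i) (v e)).
apply: (linD SR); last exact: Hsum.
apply: (lin_trans SR) (H2 e) => u /mapP' [f [fin ->]].
apply: (linB SR); last exact: Hsum.
by apply: (lin_mem SR); apply: map_f'; apply: List.in_or_app; right.
Qed.

End Hopkins.


Section ModFin.
Variables (R : comNzRingType) (R0 : set R).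
Hypothesis SR : is_subring R0.
Let S0 := S0 SR. Let S1 := S1 SR. Let SB := SB SR. Let SM := SM SR.
Let SN := SN SR. Let SD := SD SR.

Definition finalg (w : seq R^o) :=
  lin R0 w 1 /\ forall a b, a \in w -> b \in w -> lin R0 w (a * b).

Lemma lin_mulr (w : seq R^o) (y : R^o) (l : seq R^o) x :
  (forall a, a \in l -> lin R0 w (a * y)) -> lin R0 l x -> lin R0 w (x * y).
Proof.
move=> H Hx; have := lin_map (f := fun u : R^o => (u * y : R^o)) SR _ Hx.
move=> /(_ _) Hm; apply: (lin_trans SR) (Hm _) => [u /mapP [a al ->]|]; first exact: H.
by move=> c u v /=; rewrite mulrDl scalerAl.
Qed.

Lemma finalg_mul w x y : finalg w -> lin R0 w x -> lin R0 w y -> lin R0 w (x * y).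
Proof.
move=> [_ Hw] Hx Hy; apply: lin_mulr Hx => a aw.
rewrite mulrC; apply: lin_mulr Hy => b bw; rewrite mulrC; exact: Hw.
Qed.

Lemma finalg_sub w s : finalg w -> (forall y, y \in s -> lin R0 w y) ->
  forall x, gen_subalg R0 s x -> lin R0 w x.
Proof.
move=> Fw Hs x; apply; last exact: Hs.
  split; [exact: (proj1 Fw) | move=> a b; exact: (linB SR) | move=> a b; exact: finalg_mul].
by move=> r Rr; rewrite -[r]mulr1; apply: (linZ SR Rr (proj1 Fw)).
Qed.


Lemma finalg_ext w (y : R^o) (p : {poly R}) : finalg w -> p \is monic ->
  (forall i, R0 p`_i) -> root p y ->
  exists w', [/\ finalg w', (forall x, lin R0 w x -> lin R0 w' x) & lin R0 w' y].
Proof.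
move=> Fw mp Rp ry.
set d := (size p).-1.
have sp : size p = d.+1 by rewrite /d prednK // lt0n size_poly_eq0 monic_neq0.
have yd : y ^+ d = - \sum_(j < d) p`_j * y ^+ j.
  move: ry; rewrite rootE horner_coef sp big_ord_recr /=.
  have -> : p`_d = 1 by have := monicP mp; rewrite lead_coefE sp.
  by rewrite mul1r addrC addr_eq0 => /eqP.
pose w' := [seq (a * y ^+ k : R^o) | a <- w, k <- iota 0 d].
have T k : forall x, lin R0 w x -> lin R0 w' (x * y ^+ k).
  elim/ltn_ind: k => k IH x Hx; case: (ltnP k d) => kd.
    apply: lin_mulr Hx => a aw; apply: (lin_mem SR).
    by apply/allpairsP; exists (a, k); split => //; rewrite mem_iota.
  have -> : x * y ^+ k = - \sum_(j < d) (p`_j * (x * y ^+ (k - d + j))).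
    rewrite -{1}(subnK kd) exprD yd !mulrN; congr (- _).
    by rewrite !mulr_sumr; apply: eq_bigr => j _; rewrite exprD; ring.
  apply: (linN SR); apply: (lin_sum SR) => j.
  change (lin R0 w' (p`_j *: (x * y ^+ (k - d + j) : R^o))); apply: (linZ SR (Rp _)).
  apply: IH => //; have := ltn_ord j; lia.
exists w'; split.
- split; first by have := T 0%N 1 (proj1 Fw); rewrite expr0 mulr1.
  move=> a b /allpairsP [[a1 i] [/= a1w _ ->]] /allpairsP [[b1 j] [/= b1w _ ->]].
  have -> : a1 * y ^+ i * (b1 * y ^+ j) = (a1 * b1) * y ^+ (i + j) by rewrite exprD; ring.
  by apply: T; apply: (proj2 Fw).
- by move=> x Hx; have := T 0%N x Hx; rewrite expr0 mulr1.
- by have := T 1%N 1 (proj1 Fw); rewrite expr1 mul1r.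
Qed.

Lemma mod_fin (s : seq R) : integral_over R0 ->
  exists w : seq R^o, forall x, gen_subalg R0 s x -> lin R0 w x.
Proof.
move=> Int.
suff [w [Fw Hw]] : exists w, finalg w /\ forall y, y \in s -> lin R0 w y.
  by exists w; apply: finalg_sub.
elim: s => [|y s [w [Fw Hw]]].
  exists [:: 1]; split => //; split; first by apply: (lin_mem SR); rewrite mem_head.
  by move=> a b; rewrite !inE => /eqP -> /eqP ->; rewrite mulr1; apply: (lin_mem SR); rewrite mem_head.
have [p [mp Rp ry]] := Int y.
have [w' [Fw' sub yin]] := finalg_ext Fw mp Rp ry.
exists w'; split => // z; rewrite inE => /orP [/eqP ->|zs] //.
by apply: sub; apply: Hw.
Qed.

End ModFin.


Section Main.
Variables (R : comNzRingType) (R0 : set R) (n : nat).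
Hypothesis Art : artinian_subring R0.
Hypothesis Int : integral_over R0.
Let SR : is_subring R0 := proj1 Art.
Local Notation M := (artinian_ps R0 n).

Lemma coef_sum I (r : seq I) (F : I -> M) a :
  ps_coef (\sum_(i <- r) F i) a = \sum_(i <- r) ps_coef (F i) a.
Proof.
elim: r => [|i r IH]; first by rewrite !big_nil.
by rewrite !big_cons -IH.
Qed.

Lemma ps_in (m : M) : exists s, forall a, gen_subalg R0 s (ps_coef m a).
Proof.
by case: m => f /=; rewrite inE.
Qed.

Lemma mkps_in (f : mindex n -> R^o) : (forall a, R0 (f a)) -> f \in @in_Fb R R0 n.
Proof.
move=> Hf; rewrite inE; exists [::] => a S _ HS _; exact: HS.
Qed.

Lemma gen_mono s s' x : {subset s <= s'} -> gen_subalg R0 s x -> gen_subalg R0 s' x.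
Proof. by move=> sub Hx S HS RS Hs'; apply: Hx => // y ys; apply: Hs'; apply: sub. Qed.


Definition delta (i : nat) (u : R^o) : nat -> R^o := fun j => if j == i then u else 0.

Lemma delta_lin i c u v : delta i (c *: u + v) = c *: delta i u + delta i v.
Proof.
apply: funext => j; rewrite /delta !fctE; case: (j == i) => //.
by rewrite scaler0 addr0.
Qed.

Lemma sum_delta k (c : nat -> R^o) j : (j < k)%N ->
  (\sum_(i < k) delta i (c i)) j = c j.
Proof.
move=> jk; rewrite fct_sumE /= (bigD1 (Ordinal jk)) //= /delta eqxx big1 ?addr0 //.
move=> i ine; case: eqP => // ji; exfalso; move/eqP: ine; apply; apply: val_inj; by [].
Qed.

Lemma KL (ms : seq M) : exists ey : seq (mindex n * M),
  forall m, m \in ms -> m = \sum_(q <- ey) (ps_coef m q.1 : R) *: q.2.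
Proof.
have [sf Hsf] := choice ps_in.
pose S := flatten (map sf ms).
have [w Hw] := mod_fin SR S Int.
have HS m a : m \in ms -> lin R0 w (ps_coef m a).
  move=> mms; apply: Hw; apply: (gen_mono (s := sf m)); last exact: Hsf.
  by move=> y ys; apply/flattenP; exists (sf m) => //; apply: map_f.
set k := size ms.
pose col a : nat -> R^o := \sum_(i < k) delta i (ps_coef (nth 0 ms i) a).
pose W := [seq delta i u | i <- iota 0 k, u <- w].
have Hcol a : lin R0 W (col a).
  apply: (lin_sum SR) => i.
  have := lin_map (f := delta i) SR (fun c u v => delta_lin i c u v) (HS (nth 0 ms i) a (mem_nth _ (ltn_ord i))).
  apply: (lin_sub SR) => u /mapP [v vw ->]; apply: allpairs_f => //.
  by rewrite mem_iota /= add0n.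
have [es Hes] := noeth_mod Art Hcol.
have [lam Hlam] := choice (fun a => linP SR (Hes a)).
pose a0 : mindex n := [ffun=> 0%N].
pose y j : M := APS (mkps_in (fun a => proj1 (Hlam a) j)).
exists [seq (nth a0 es j, y j) | j <- iota 0 (size es)] => m mms.
apply: val_inj; apply: funext => a /=.
rewrite coef_sum big_map /=.
have ik : (index m ms < k)%N by rewrite index_mem.
have := congr1 (fun f => f (index m ms)) (proj2 (Hlam a)).
rewrite /col (sum_delta (fun i => ps_coef (nth 0 ms i) a)) // nth_index // => ->.
rewrite fct_sumE /= size_map -[in RHS](subn0 (size es)) big_mkord.
apply: eq_bigr => j _; rewrite !fctE (nth_map a0) //.
rewrite (sum_delta (fun i => ps_coef (nth 0 ms i) (nth a0 es j))) // nth_index //.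
exact: mulrC.
Qed.


Section Bil.
Variables (N M' P : lmodType R) (B : N -> M' -> P).
Hypothesis HB : bilinear_map B.
Lemma B0l m : B 0 m = 0.
Proof. by have := (proj1 HB) (-1) 0 0 m; rewrite scaler0 addr0 scaleN1r addNr. Qed.
Lemma BDl x y m : B (x + y) m = B x m + B y m.
Proof. by have := (proj1 HB) 1 x y m; rewrite !scale1r. Qed.
Lemma BZl a x m : B (a *: x) m = a *: B x m.
Proof. by have := (proj1 HB) a x 0 m; rewrite !addr0 B0l addr0. Qed.
Lemma BNl x m : B (- x) m = - B x m.
Proof. by rewrite -scaleN1r BZl scaleN1r. Qed.
Lemma B0r x : B x 0 = 0.
Proof. by have := (proj2 HB) (-1) x 0 0; rewrite scaler0 addr0 scaleN1r addNr. Qed.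
Lemma BZr a x m : B x (a *: m) = a *: B x m.
Proof. by have := (proj2 HB) a x m 0; rewrite !addr0 B0r addr0. Qed.
Lemma Bsuml I (r : seq I) (F : I -> N) m : B (\sum_(i <- r) F i) m = \sum_(i <- r) B (F i) m.
Proof. elim: r => [|i r IH]; first by rewrite !big_nil B0l. by rewrite !big_cons BDl IH. Qed.
Lemma Bsumr I (r : seq I) x (F : I -> M') : B x (\sum_(i <- r) F i) = \sum_(i <- r) B x (F i).
Proof.
elim: r => [|i r IH]; first by rewrite !big_nil B0r.
by rewrite !big_cons; have := (proj2 HB) 1 x (F i) (\sum_(j <- r) F j); rewrite !scale1r IH.
Qed.
End Bil.

Lemma coef_bil (N : lmodType R) (a : mindex n) :
  bilinear_map (fun (x : N) (mm : M) => (ps_coef mm a : R) *: x).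
Proof.
split => [c x y m | c x m1 m2] /=.
  by rewrite scalerDr !scalerA mulrC.
by rewrite scalerDl -scalerA.
Qed.

Theorem ff : faithfully_flat M.
Proof.
move=> N1 N2 N3 f g fg; split.
- move=> Hex s Hz.
  have [ey Hey] := KL (map snd s).
  pose u (q : mindex n * M) : N2 := \sum_(p <- s) (ps_coef p.2 q.1 : R) *: p.1.
  have gu q : g (u q) = 0.
    have := Hz N3 _ (coef_bil N3 q.1); rewrite big_map /= => H0.
    rewrite /u linear_sum; transitivity (\sum_(p <- s) (ps_coef p.2 q.1 : R) *: g p.1); last exact: H0.
    by apply: eq_bigr => p _; rewrite linearZ.
  have [xf Hxf] := choice (fun q => Hex (u q) (gu q)).
  exists (map (fun q => (xf q, q.2)) ey) => P B HB.
  rewrite big_cat /= !big_map /=.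
  have -> : \sum_(q <- ey) B (f (xf q)) q.2 = \sum_(p <- s) B p.1 p.2.
    under eq_bigr => q _ do rewrite Hxf /u (Bsuml HB).
    rewrite exchange_big /=; apply: eq_big_seq => p ps.
    under eq_bigr => q _ do rewrite (BZl HB) -(BZr HB).
    rewrite -(Bsumr HB); congr (B _ _); symmetry; apply: Hey.
    by apply: map_f.
  rewrite -big_split /=; apply: big1 => p _.
  by rewrite (BNl HB) subrr.
- move=> Htex y gy.
  pose a0 : mindex n := [ffun=> 0%N].
  have Hone : forall a, R0 (if a == a0 then 1 else 0).
    move=> a; case: ifP => _; [exact: (S1 SR)| exact: (S0 SR)].
  pose one : M := APS (@mkps_in (fun a => if a == a0 then 1 else 0) Hone).
  have Hz : tensor_zero [seq (g p.1, p.2) | p <- [:: (y, one)]].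
    by move=> P B HB; rewrite /= big_cons big_nil gy (B0l HB) addr0.
  have [t Ht] := Htex [:: (y, one)] Hz.
  exists (\sum_(p <- t) (ps_coef p.2 a0 : R) *: p.1).
  have := Ht N2 _ (coef_bil N2 a0); rewrite big_cat /= !big_map big_cons big_nil /= eqxx.
  rewrite scale1r addr0 linear_sum => /eqP; rewrite subr_eq0 => /eqP <-.
  by apply: eq_bigr => p _; rewrite linearZ.
Qed.

End Main.

Theorem theorem3p4 (R : comNzRingType) (R0 : set R) :
  krull_dim0 R -> artinian_subring R0 -> integral_over R0 ->
  forall n : nat, (1 <= n)%N -> faithfully_flat (artinian_ps R0 n).
Proof. by move=> _ Art Int n _; apply: ff. Qed.
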